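(* Let $U\in C([0,1])\cap C^1((0,1])\cap C^2((0,1))$ satisfy $U''>0$ on $(0,1)$, $\lim_{h\downarrow0}U'(h)=-\infty$, $r\mapsto rU''(r)$ non-decreasing on $(0,1)$, and $U(0)=U(1)=0$. Let $D>0$ and $R\in(1/2,1)$ satisfy $U'(R)-U'(1-R)=D$. Then the function $r\mapsto Dr-U(r)-U(1-r)$ is strictly increasing on $[0,R]$, and for every $r\in(0,R]$, \[-U(r)-U(1-r)\le -rU'(r)+r\sup_{\rho\in(0,R]}\big(U'(1-\rho)+\rho U''(\rho)\big).\] *)

(* Defs.v *)
From Stdlib Require Import Reals.
From Coquelicot Require Import Coquelicot.
Open Scope R_scope.

Definition cont_on_closed (U : R -> R) (a b : R) : Prop :=
  forall x, a <= x <= b ->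
    filterlim U (within (fun y => a <= y <= b) (locally x)) (locally (U x)).

Definition C1_0_1 (U : R -> R) : Prop :=
  (forall x, 0 < x < 1 -> ex_derive U x) /\
  (forall x, 0 < x < 1 -> continuous (Derive U) x) /\
  exists d1 : R,
    filterlim (fun h => (U (1 + h) - U 1) / h) (at_left 0) (locally d1) /\
    filterlim (Derive U) (at_left 1) (locally d1).

Definition C2_0_1 (U : R -> R) : Prop :=
  forall x, 0 < x < 1 ->
    ex_derive U x /\ ex_derive (Derive U) x /\
    continuous (Derive (Derive U)) x.

(* Main.v *)
Require Import Defs.
From Stdlib Require Import Reals Lra.
From Coquelicot Require Import Coquelicot.
Open Scope R_scope.

Lemma cont_eps (U : R -> R) (HU0 : cont_on_closed U 0 1) x :
  0 <= x <= 1 -> forall eps, 0 < eps -> exists delta, 0 < delta /\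
  forall y, 0 <= y <= 1 -> Rabs (y - x) < delta -> Rabs (U y - U x) < eps.
Proof.
  intros Hx eps He.
  destruct (proj1 (filterlim_locally U (U x)) (HU0 x Hx) (mkposreal eps He))
    as [d Hd].
  exists d. split; [apply cond_pos|].
  intros y Hy Hyx. apply (Hd y). exact Hyx. exact Hy.
Qed.

Lemma g_deriv (U : R -> R) (D x : R) :
  ex_derive U x -> ex_derive U (1-x) -> ex_derive (Derive U) x ->
  is_derive (fun x => D*x - U x - U (1-x)) x
    (D - Derive U x + Derive U (1-x)) /\
  is_derive (fun x => - U x - U (1-x) + x * Derive U x) x
    (Derive U (1-x) + x * Derive (Derive U) x).
Proof.
  intros H H0 H1. split.
  - auto_derive.
    + replace (1 + - x) with (1 - x) by ring. tauto.
    + replace (1 + - x) with (1 - x) by ring. match goal with |- ?a = ?b => change (@eq R a b) end; change (Derive (fun x0 : R => U x0)) with (Derive U); try change (Derive (fun x0 : R => Derive U x0)) with (Derive (Derive U)); ring.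
  - auto_derive.
    + replace (1 + - x) with (1 - x) by ring. tauto.
    + replace (1 + - x) with (1 - x) by ring. match goal with |- ?a = ?b => change (@eq R a b) end; change (Derive (fun x0 : R => U x0)) with (Derive U); try change (Derive (fun x0 : R => Derive U x0)) with (Derive (Derive U)); ring.
Qed.

Lemma mono (U : R -> R) (HU2 : C2_0_1 U)
  (Hconv : forall x, 0 < x < 1 -> Derive (Derive U) x > 0) a b :
  0 < a -> a < b -> b < 1 -> Derive U a < Derive U b.
Proof.
  intros Ha Hab Hb.
  destruct (MVT_cor2 (Derive U) (Derive (Derive U)) a b Hab) as [c [Hc1 Hc2]].
  - intros c Hc. apply is_derive_Reals. apply Derive_correct.
    apply (HU2 c). lra.
  - assert (Derive (Derive U) c > 0) by (apply Hconv; lra).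
    assert (0 < Derive (Derive U) c * (b - a)) by (apply Rmult_lt_0_compat; lra).
    lra.
Qed.

Lemma convex0 (U : R -> R) (HU0 : cont_on_closed U 0 1) (HU2 : C2_0_1 U)
  (Hconv : forall x, 0 < x < 1 -> Derive (Derive U) x > 0) (Hz0 : U 0 = 0) b :
  0 < b < 1 -> U b <= b * Derive U b.
Proof.
  intros Hb.
  assert (key : forall a, 0 < a < b -> U b - U a <= (b - a) * Derive U b).
  { intros a Ha.
    destruct (MVT_cor2 U (Derive U) a b (proj2 Ha)) as [c [Hc1 Hc2]].
    - intros c Hc. apply is_derive_Reals. apply Derive_correct.
      apply (HU2 c). lra.
    - assert (Derive U c < Derive U b) by (apply (mono U HU2 Hconv); lra).
      assert (Derive U c * (b - a) <= Derive U b * (b - a))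
        by (apply Rmult_le_compat_r; lra).
      lra. }
  apply le_epsilon. intros eta Heta.
  destruct (cont_eps U HU0 0 ltac:(lra) (eta/2) ltac:(lra)) as [d [Hd Hd2]].
  set (m := Rmin (d/2) (Rmin (b/2) (eta / (2 * (Rabs (Derive U b) + 1))))).
  assert (Hpos : 0 < Rabs (Derive U b) + 1) by (pose proof (Rabs_pos (Derive U b)); lra).
  assert (Hm0 : 0 < m).
  { unfold m. repeat apply Rmin_pos; try lra.
    apply Rdiv_lt_0_compat; lra. }
  assert (Hm1 : m <= d/2) by apply Rmin_l.
  assert (Hm2 : m <= b/2) by (unfold m; eapply Rle_trans; [apply Rmin_r|apply Rmin_l]).
  assert (Hm3 : m <= eta / (2 * (Rabs (Derive U b) + 1)))
    by (unfold m; eapply Rle_trans; [apply Rmin_r|apply Rmin_r]).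
  specialize (key m ltac:(lra)).
  specialize (Hd2 m ltac:(lra)).
  rewrite Hz0, !Rminus_0_r in Hd2.
  assert (Hu : Rabs (U m) < eta/2) by (apply Hd2; rewrite Rabs_right; lra).
  apply Rabs_def2 in Hu.
  assert (Hmd : m * Rabs (Derive U b) <= eta / 2).
  { apply Rle_trans with (eta / (2 * (Rabs (Derive U b) + 1)) * (Rabs (Derive U b) + 1)).
    - apply Rmult_le_compat; try lra; apply Rabs_pos.
    - right. field. lra. }
  assert (m * Derive U b >= - (m * Rabs (Derive U b))).
  { pose proof (Rle_abs (- Derive U b)). rewrite Rabs_Ropp in H.
    pose proof (Rmult_le_compat_l m _ _ (Rlt_le _ _ Hm0) H). lra. }
  lra.
Qed.

Lemma tangent (U : R -> R) (HU2 : C2_0_1 U)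
  (Hconv : forall x, 0 < x < 1 -> Derive (Derive U) x > 0) a b :
  0 < a -> a < b -> b < 1 ->
  (b - a) * Derive U a <= U b - U a <= (b - a) * Derive U b.
Proof.
  intros Ha Hab Hb.
  destruct (MVT_cor2 U (Derive U) a b Hab) as [c [Hc1 Hc2]].
  - intros c Hc. apply is_derive_Reals. apply Derive_correct.
    apply (HU2 c). lra.
  - assert (Derive U c < Derive U b) by (apply (mono U HU2 Hconv); lra).
    assert (Derive U a < Derive U c) by (apply (mono U HU2 Hconv); lra).
    assert (Derive U c * (b - a) <= Derive U b * (b - a))
      by (apply Rmult_le_compat_r; lra).
    assert (Derive U a * (b - a) <= Derive U c * (b - a))
      by (apply Rmult_le_compat_r; lra).
    lra.
Qed.

Lemma pick4 a b c d : 0 < a -> 0 < b -> 0 < c -> 0 < d ->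
  exists e, 0 < e /\ e <= a /\ e <= b /\ e <= c /\ e <= d.
Proof.
  intros. exists (Rmin a (Rmin b (Rmin c d))).
  repeat split.
  - repeat apply Rmin_pos; assumption.
  - apply Rmin_l.
  - eapply Rle_trans; [apply Rmin_r|apply Rmin_l].
  - eapply Rle_trans; [apply Rmin_r|]. eapply Rle_trans; [apply Rmin_r|apply Rmin_l].
  - eapply Rle_trans; [apply Rmin_r|]. eapply Rle_trans; [apply Rmin_r|apply Rmin_r].
Qed.

Lemma small_mul s e eta : 0 < eta -> 0 <= e -> e <= eta / (4 * (Rabs s + 1)) ->
  Rabs (s * e) <= eta / 4.
Proof.
  intros He Hpos Hle.
  assert (Hp : 0 < Rabs s + 1) by (pose proof (Rabs_pos s); lra).
  rewrite Rabs_mult, (Rabs_right e) by lra.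
  apply Rle_trans with (Rabs s * (eta / (4 * (Rabs s + 1)))).
  - apply Rmult_le_compat_l; [apply Rabs_pos|lra].
  - apply Rle_trans with ((Rabs s + 1) * (eta / (4 * (Rabs s + 1)))).
    + apply Rmult_le_compat_r; [|lra]. apply Rlt_le, Rdiv_lt_0_compat; lra.
    + right. field. lra.
Qed.

Lemma abs_le_b x a : Rabs x <= a -> - a <= x <= a.
Proof.
  intros H. pose proof (Rle_abs x). pose proof (Rle_abs (- x)).
  rewrite Rabs_Ropp in H1. lra.
Qed.

Theorem lemma3p3 (U : R -> R) (D Rr : R)
  (HU0 : cont_on_closed U 0 1)
  (HU1 : C1_0_1 U)
  (HU2 : C2_0_1 U)
  (Hconv : forall x, 0 < x < 1 -> Derive (Derive U) x > 0)
  (Hlim : filterlim (Derive U) (at_right 0) (Rbar_locally m_infty))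
  (Hmon : forall r s, 0 < r -> r <= s -> s < 1 ->
            r * Derive (Derive U) r <= s * Derive (Derive U) s)
  (Hz0 : U 0 = 0) (Hz1 : U 1 = 0)
  (HD : D > 0) (HR : 1/2 < Rr < 1)
  (HDR : Derive U Rr - Derive U (1 - Rr) = D) :
  (forall r s, 0 <= r -> r < s -> s <= Rr ->
     D * r - U r - U (1 - r) < D * s - U s - U (1 - s)) /\
  (forall r, 0 < r <= Rr ->
     Rbar_le (Finite (- U r - U (1 - r)))
       (Rbar_plus (Finite (- r * Derive U r))
          (Rbar_mult (Finite r)
             (Lub_Rbar (fun y => exists rho, 0 < rho <= Rr /\
                 y = Derive U (1 - rho) + rho * Derive (Derive U) rho))))).

Proof.
  assert (dU : forall x, 0 < x < 1 -> ex_derive U x) by (intros x Hx; apply (HU2 x Hx)).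
  assert (dU2 : forall x, 0 < x < 1 -> ex_derive (Derive U) x) by (intros x Hx; apply (HU2 x Hx)).
  assert (strict : forall a b, 0 < a -> a < b -> b <= Rr ->
     D * a - U a - U (1 - a) < D * b - U b - U (1 - b)).
  { intros a b Ha Hab Hb.
    destruct (MVT_cor2 (fun x => D * x - U x - U (1 - x))
      (fun x => D - Derive U x + Derive U (1 - x)) a b Hab) as [c [Hc1 Hc2]].
    - intros c Hc. apply is_derive_Reals.
      apply (proj1 (g_deriv U D c (dU c ltac:(lra)) (dU (1-c) ltac:(lra)) (dU2 c ltac:(lra)))).
    - assert (Derive U c < Derive U Rr) by (apply (mono U HU2 Hconv); lra).
      assert (Derive U (1 - Rr) < Derive U (1 - c)) by (apply (mono U HU2 Hconv); lra).
      assert (0 < (D - Derive U c + Derive U (1 - c)) * (b - a))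
        by (apply Rmult_lt_0_compat; lra).
      lra. }
  assert (nonneg : forall s, 0 < s <= Rr -> 0 <= D * s - U s - U (1 - s)).
  { intros s Hs. apply le_epsilon. intros eta Heta.
    destruct (cont_eps U HU0 0 ltac:(lra) (eta/4) ltac:(lra)) as [d0 [Hd0 Hd0']].
    destruct (cont_eps U HU0 1 ltac:(lra) (eta/4) ltac:(lra)) as [d1 [Hd1 Hd1']].
    destruct (pick4 (s/2) (d0/2) (d1/2) (eta / (4 * (Rabs D + 1)))) as [e [He [He1 [He2 [He3 He4]]]]];
      try lra.
    { apply Rdiv_lt_0_compat; [lra|]. pose proof (Rabs_pos D); lra. }
    assert (e < d0) by lra. assert (e < d1) by lra.
    specialize (Hd0' e ltac:(lra) ltac:(rewrite Rminus_0_r, Rabs_right; lra)).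
    specialize (Hd1' (1 - e) ltac:(lra) ltac:(replace (1 - e - 1) with (- e) by ring; rewrite Rabs_Ropp, Rabs_right; lra)).
    rewrite Hz0, Rminus_0_r in Hd0'. rewrite Hz1, Rminus_0_r in Hd1'.
    apply Rabs_def2 in Hd0'. apply Rabs_def2 in Hd1'.
    pose proof (small_mul D e eta ltac:(lra) ltac:(lra) He4) as Hm.
    apply abs_le_b in Hm.
    specialize (strict e s He ltac:(lra) ltac:(lra)).
    lra. }
  split.
  - intros r s Hr Hrs Hs.
    destruct (Req_dec r 0) as [->|Hr0].
    + rewrite Rmult_0_r, Rminus_0_r, Hz0, Hz1.
      pose proof (nonneg (s/2) ltac:(lra)).
      pose proof (strict (s/2) s ltac:(lra) ltac:(lra) Hs). lra.
    + apply strict; lra.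
  - intros r Hr.
    match goal with |- context[Lub_Rbar ?E] =>
      pose proof (Lub_Rbar_correct E) as [Hub Hlub];
      assert (HE : E (Derive U (1 - Rr) + Rr * Derive (Derive U) Rr))
        by (exists Rr; split; [lra|reflexivity]);
      destruct (Lub_Rbar E) as [s| |] end.
    + simpl. apply le_epsilon. intros eta Heta.
      destruct (cont_eps U HU0 0 ltac:(lra) (eta/8) ltac:(lra)) as [d0 [Hd0 Hd0']].
      destruct (cont_eps U HU0 1 ltac:(lra) (eta/4) ltac:(lra)) as [d1 [Hd1 Hd1']].
      destruct (pick4 (r/4) (d0/4) (d1/2) (eta / (4 * (Rabs s + 1)))) as [e [He [He1 [He2 [He3 He4]]]]];
        try lra.
      { apply Rdiv_lt_0_compat; [lra|]. pose proof (Rabs_pos s); lra. }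
      assert (e < d1) by lra.
      pose proof (Hd0' e ltac:(lra) ltac:(rewrite Rminus_0_r, Rabs_right; lra)) as Hu1.
      pose proof (Hd0' (2 * e) ltac:(lra) ltac:(rewrite Rminus_0_r, Rabs_right; lra)) as Hu2.
      specialize (Hd1' (1 - e) ltac:(lra) ltac:(replace (1 - e - 1) with (- e) by ring; rewrite Rabs_Ropp, Rabs_right; lra)).
      rewrite Hz0, Rminus_0_r in Hu1, Hu2. rewrite Hz1, Rminus_0_r in Hd1'.
      apply Rabs_def2 in Hu1. apply Rabs_def2 in Hu2. apply Rabs_def2 in Hd1'.
      pose proof (small_mul s e eta ltac:(lra) ltac:(lra) He4) as Hm.
      apply abs_le_b in Hm.
      pose proof (tangent U HU2 Hconv e (2 * e) He ltac:(lra) ltac:(lra)) as Ht.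
      destruct (MVT_cor2 (fun x => - U x - U (1 - x) + x * Derive U x)
        (fun x => Derive U (1 - x) + x * Derive (Derive U) x) e r ltac:(lra))
        as [c [Hc1 Hc2]].
      { intros c Hc. apply is_derive_Reals.
        apply (proj2 (g_deriv U D c (dU c ltac:(lra)) (dU (1-c) ltac:(lra)) (dU2 c ltac:(lra)))). }
      assert (Hcs : Derive U (1 - c) + c * Derive (Derive U) c <= s).
      { apply (Hub _). exists c. split; [lra|reflexivity]. }
      assert ((Derive U (1 - c) + c * Derive (Derive U) c) * (r - e) <= s * (r - e))
        by (apply Rmult_le_compat_r; lra).
      replace (2 * e - e) with e in Ht by ring.
      lra.
    + simpl. destruct (Rle_dec 0 r) as [H0|H0]; [|lra].
      destruct (Rle_lt_or_eq_dec 0 r H0) as [H1|H1]; [simpl; exact I|lra].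
    + exfalso. specialize (Hub _ HE). simpl in Hub. exact Hub.
Qed.
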